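(* An undirected graph $\mathcal{U}$ is a UEC-representative if and only if $\alpha(\mathcal{U})=\delta(\mathcal{U})$.
   Context: For a DAG $\mathcal{D}$, a trek is a path with no repeated vertices and no collider (a node whose two incident path edges both point into it); the unconditional dependence graph $\mathcal{U}^\mathcal{D}$ is the undirected graph on the nodes of $\mathcal{D}$ in which distinct $v,w$ are adjacent iff there is a trek between them. An undirected graph $\mathcal{U}$ on vertex set $V$ is a UEC-representative if $\mathcal{U}=\mathcal{U}^\mathcal{D}$ for some DAG $\mathcal{D}$ on $V$. A clique is a set of pairwise adjacent vertices (single vertices are cliques). An edge clique cover of $\mathcal{U}$ is a collection of cliques such that every vertex and every edge of $\mathcal{U}$ lies in at least one clique of the collection; the intersection number $\delta(\mathcal{U})$ is the minimum cardinality of an edge clique cover. The independence number $\alpha(\mathcal{U})$ is the maximum cardinality of a set of pairwise nonadjacent vertices. *)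

(* Defs.v *)
From mathcomp Require Import all_boot.
Set Implicit Arguments. Unset Strict Implicit. Unset Printing Implicit Defensive.

Record ugraph (V : finType) := UGraph {
  adj : rel V;
  adj_sym : symmetric adj;
  adj_irr : irreflexive adj }.

Section Defs.
Variable V : finType.

(* A DAG on V: directed edge relation [D x y] means x -> y, with no directed
   cycle (equivalently: no edge x -> y with y reaching x). *)
Definition acyclic (D : rel V) : Prop := forall x y, D x y -> ~~ connect D y x.

Fixpoint no_collider (D : rel V) (s : seq V) : bool :=
  match s with
  | a :: ((b :: c :: _) as t) => ~~ (D a b && D c b) && no_collider D t
  | _ => true
  end.

Definition is_trek (D : rel V) (x y : V) (p : seq V) : bool :=
  [&& path (fun a b => D a b || D b a) x p, last x p == y,
      uniq (x :: p) & no_collider D (x :: p)].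

Definition udg_adj (D : rel V) (v w : V) : Prop :=
  v != w /\ exists p, is_trek D v w p.

Definition UEC_representative (U : ugraph V) : Prop :=
  exists D : rel V, acyclic D /\ forall v w, adj U v w <-> udg_adj D v w.

Definition clique (U : ugraph V) (C : {set V}) : bool :=
  [forall x in C, forall y in C, (x != y) ==> adj U x y].

Definition stable (U : ugraph V) (S : {set V}) : bool :=
  [forall x in S, forall y in S, ~~ adj U x y].

Definition is_ecc (U : ugraph V) (F : {set {set V}}) : bool :=
  [&& [forall C in F, clique U C],
      [forall v, exists C in F, v \in C] &
      [forall v, forall w, adj U v w ==> [exists C in F, (v \in C) && (w \in C)]]].

Definition alpha (U : ugraph V) : nat := \max_(S : {set V} | stable U S) #|S|.

Lemma ecc_exists (U : ugraph V) : exists n : nat, [exists F : {set {set V}}, is_ecc U F && (#|F| == n)].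
Proof.
exists #|[set C | clique U C]|; apply/existsP; exists [set C | clique U C]; rewrite eqxx andbT.
apply/and3P; split.
- by apply/forall_inP => C; rewrite inE.
- apply/forallP => v; apply/exists_inP; exists [set v]; last by rewrite inE.
  rewrite inE; apply/forall_inP => x; rewrite inE => /eqP ->.
  by apply/forall_inP => y; rewrite inE => /eqP ->; rewrite eqxx.
- apply/forallP => v; apply/forallP => w; apply/implyP => hvw.
  apply/exists_inP; exists [set v; w]; last by rewrite !inE !eqxx orbT.
  rewrite inE; apply/forall_inP => x; rewrite !inE => hx.
  apply/forall_inP => y; rewrite !inE => hy; apply/implyP.
  case/orP: hx => /eqP ->; case/orP: hy => /eqP ->; rewrite ?eqxx //= => _ //.
  by rewrite adj_sym.
Qed.

Definition delta (U : ugraph V) : nat := ex_minn (ecc_exists U).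

End Defs.

(* Main.v *)
Require Import Defs.
From mathcomp Require Import all_boot.
Set Implicit Arguments. Unset Strict Implicit. Unset Printing Implicit Defensive.

Section Helpers.
Variable V : finType.
Implicit Types (D : rel V).

Lemma nc_cons D a t : no_collider D (a :: t) -> no_collider D t.
Proof. by case: t => [|b [|c r]] //= /andP[]. Qed.

Lemma nc_cat D s1 s2 : no_collider D (s1 ++ s2) -> no_collider D s2.
Proof. elim: s1 => //= a s1 IH /nc_cons; exact: IH. Qed.

Lemma acyc_irr D x : acyclic D -> ~~ D x x.
Proof. move=> hD; apply/negP => hxx; by move: (hD _ _ hxx); rewrite connect0. Qed.

Lemma acyc_asym D x y : acyclic D -> D x y -> ~~ D y x.
Proof. move=> hD hxy; apply/negP => hyx; by move: (hD _ _ hxy); rewrite connect1. Qed.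

Lemma trek_nil D a : is_trek D a a [::].
Proof. by rewrite /is_trek /= eqxx. Qed.

Lemma trek_prepend D z y p x : acyclic D -> is_trek D z y p -> D z x -> x != y ->
  exists p', is_trek D x y p'.
Proof.
move=> hD /and4P[hp hl hu hnc] hzx hxy.
have hxz : x != z.
  by apply/eqP => exz; move: (acyc_irr z hD); rewrite -{2}exz hzx.
case: (boolP (x \in p)) => hxp.
- case/splitPr: hxp hp hl hu hnc => p1 p2 hp hl hu hnc.
  exists p2; apply/and4P; split.
  + by move: hp; rewrite cat_path /= => /and3P[].
  + by move: hl; rewrite last_cat.
  + by move: hu; rewrite /= cat_uniq => /andP[_ /and3P[_ _]].
  + by apply: (@nc_cat D (z :: p1)); rewrite cat_cons.
- exists (z :: p); apply/and4P; split.
  + by rewrite /= hzx orbT.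
  + done.
  + by rewrite /= in_cons negb_or hxz hxp.
  + move: hnc; case: p {hp hl hu hxp} => [|c r] //= hnc.
    by rewrite (negbTE (acyc_asym hD hzx)).
Qed.

Lemma trek_anc D x p : path (fun a b => D a b || D b a) x p -> no_collider D (x :: p) ->
  (exists a, connect D a x && connect D a (last x p)) /\
  (D x (head x p) -> connect D x (last x p)).
Proof.
elim: p x => [|z p IH] x.
  by move=> _ _; split; [exists x; rewrite connect0 | rewrite /= connect0].
move=> hp0 hnc; move: hp0 => /= /andP[hxz hp]; rewrite [last _ _]/=.
have [[a /andP[haz hal]] hf] := IH z hp (nc_cons hnc).
have h2 : D x z -> connect D x (last z p).
  move=> dxz; apply: connect_trans (connect1 dxz) _.
  move: hp hnc hf; case: p {IH hal} => [|c r] /=; first by rewrite connect0.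
  move=> /andP[hzc _] /andP[hn _] hf; apply: hf.
  by case/orP: hzc => // hcz; move: hn; rewrite dxz hcz.
split=> //.
case/orP: hxz => [dxz|dzx]; first by exists x; rewrite connect0 h2.
by exists a; rewrite hal (connect_trans haz (connect1 dzx)).
Qed.

Lemma acyc_notin D a q : acyclic D -> path D a q -> a \notin q.
Proof.
move=> hD; case: q => [|u q] //= /andP[hau hq].
apply/negP => ha.
by move: (hD _ _ hau); rewrite (path_connect hq ha).
Qed.

Lemma trek_desc D a y p q : acyclic D -> is_trek D a y p -> path D a q -> last a q != y ->
  (exists p', is_trek D (last a q) y p') \/ y \in q.
Proof.
move=> hD; elim: q a p => [|u q IH] a p ht /=; first by left; exists p.
move=> /andP[hau hq] hl.
case: (eqVneq u y) => [<-|huy]; first by right; rewrite mem_head.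
have [p' ht'] := trek_prepend hD ht hau huy.
case: (IH u p' ht' hq hl) => [h|h]; [by left | by right; rewrite in_cons h orbT].
Qed.

Lemma trek_to_anc D s y : acyclic D -> connect D s y -> y != s -> exists p, is_trek D y s p.
Proof.
move=> hD /connectP[q hq ->] hne.
case: (trek_desc hD (trek_nil D s) hq hne) => // h.
by move: (acyc_notin hD hq); rewrite h.
Qed.

Definition source D s := [forall u, ~~ D u s].

Lemma anc_source D a s : source D s -> connect D a s -> a = s.
Proof.
move=> /forallP hs /connectP[q hq es].
move: hq es; case/lastP: q => [|q t] //=; rewrite rcons_path last_rcons => /andP[_ ht] et.
by move: (hs (last a q)); rewrite et ht.
Qed.

Lemma exists_source D v : acyclic D -> exists2 s, source D s & connect D s v.
Proof.
move=> hD.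
suff H : forall n v, #|[set u | connect D u v]| <= n -> exists2 s, source D s & connect D s v.
  exact: H (leqnn _).
elim=> [|n IH] {}v hn.
  by move: hn; rewrite leqn0 => /eqP/cards0_eq/setP/(_ v); rewrite !inE connect0.
case: (boolP (source D v)) => [hs|]; first by exists v; rewrite ?connect0.
rewrite negb_forall => /existsP[u /negPn huv].
have [s hs hsu] : exists2 s, source D s & connect D s u.
  apply: IH; rewrite -ltnS; apply: leq_trans hn; apply: proper_card.
  rewrite properE; apply/andP; split.
    apply/subsetP => w; rewrite !inE => hw; exact: connect_trans hw (connect1 huv).
  apply/subsetPn; exists v; rewrite !inE ?connect0 //.
  exact: hD _ _ huv.
by exists s => //; exact: connect_trans hsu (connect1 huv).
Qed.

End Helpers.

Section Graph.
Variable V : finType.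
Variable U : ugraph V.

Lemma cliqueP C x y : clique U C -> x \in C -> y \in C -> x != y -> adj U x y.
Proof. by move=> /forall_inP/(_ x) h hx hy; move: (h hx) => /forall_inP/(_ y hy)/implyP. Qed.

Lemma stableP S x y : stable U S -> x \in S -> y \in S -> ~~ adj U x y.
Proof. by move=> /forall_inP/(_ x) h hx hy; move: (h hx) => /forall_inP/(_ y hy). Qed.

Lemma alpha_wit : exists2 S, stable U S & #|S| = alpha U.
Proof.
have h0 : 0 < #|stable U|.
  apply/card_gt0P; exists set0; apply/forall_inP => x; by rewrite inE.
have [S hS e] := eq_bigmax_cond (fun S : {set V} => #|S|) h0.
by exists S => //; rewrite /alpha e.
Qed.

Definition gpick (F : {set {set V}}) (s : V) : {set V} := odflt set0 [pick C in F | s \in C].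

Lemma gpickP F s : is_ecc U F -> gpick F s \in F /\ s \in gpick F s.
Proof.
case/and3P => _ /forallP /(_ s) /exists_inP [C hC hsC] _.
rewrite /gpick; case: pickP => [C' /andP[]|/(_ C)] //=.
by rewrite hC hsC.
Qed.

Lemma gpick_inj F S : is_ecc U F -> stable U S -> {in S &, injective (gpick F)}.
Proof.
move=> hF hS s t hs ht e.
have [hsF hsC] := gpickP s hF; have [_ htC] := gpickP t hF.
apply/eqP; apply: contraNT (stableP hS hs ht) => hst.
apply: (cliqueP _ hsC) => //; last by rewrite e.
by case/and3P: hF => /forall_inP /(_ _ hsF).
Qed.

Lemma alpha_le_delta : alpha U <= delta U.
Proof.
have [S hS <-] := alpha_wit.
rewrite /delta; case: ex_minnP => n /existsP[F /andP[hF /eqP <-]] _.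
rewrite -(card_in_imset (gpick_inj hF hS)).
apply: subset_leq_card; apply/subsetP => C /imsetP[s _ ->]; exact: (gpickP s hF).1.
Qed.

End Graph.

Section Main.
Variable V : finType.
Variable U : ugraph V.

Lemma uec_forward D : acyclic D -> (forall v w, adj U v w <-> udg_adj D v w) ->
  delta U <= alpha U.
Proof.
move=> hD H.
have trek_adj : forall x y p, x != y -> is_trek D x y p -> adj U x y.
  by move=> x y p hxy hp; apply/H; split=> //; exists p.
have anc : forall x y, adj U x y -> exists a, connect D a x && connect D a y.
  move=> x y /H [_ [p /and4P[hp /eqP <- _ hnc]]]; exact: (trek_anc hp hnc).1.
have t1 : forall z w, connect D z w -> w != z -> adj U z w.
  move=> z w hzw hne; have [p hp] := trek_to_anc hD hzw hne.
  by rewrite adj_sym; exact: trek_adj hp.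
have desc_adj : forall s x y, connect D s x -> connect D s y -> x != y -> adj U x y.
  move=> s x y hx hy hxy.
  case: (eqVneq x s) => [exs|hxs].
    by subst; apply: t1 => //; rewrite eq_sym.
  case: (eqVneq y s) => [eys|hys].
    by subst; rewrite adj_sym; apply: t1.
  have hsy := t1 s y hy hys.
  move/H: hsy => [_ [p hp]].
  move/connectP: hx => [q hq hlx].
  case: (trek_desc hD hp hq); first by rewrite -hlx.
  - by move=> [p' hp']; apply: (trek_adj _ _ p') => //; rewrite hlx.
  - move=> hyq.
    have hyx : connect D y x.
      move: hq hlx; case/splitPr: hyq => q1 q2.
      rewrite cat_path last_cat => /andP[_ /= /andP[_ h2]] ->.
      exact: (path_connect h2 (mem_last _ _)).
    by rewrite adj_sym; apply: t1.
pose Src := [set s | source D s].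
pose F := [set [set v | connect D s v] | s in Src].
have hF : is_ecc U F.
  apply/and3P; split.
  - apply/forall_inP => C /imsetP[s _ ->]; apply/forall_inP => x; rewrite inE => hx.
    apply/forall_inP => y; rewrite inE => hy; apply/implyP; exact: desc_adj hx hy.
  - apply/forallP => v; have [s hs hsv] := exists_source v hD.
    apply/exists_inP; exists [set v | connect D s v]; last by rewrite inE.
    by apply: imset_f; rewrite inE.
  - apply/forallP => v; apply/forallP => w; apply/implyP => hvw.
    have [a /andP[hav haw]] := anc _ _ hvw.
    have [s hs hsa] := exists_source a hD.
    apply/exists_inP; exists [set v | connect D s v]; first by apply: imset_f; rewrite inE.
    by rewrite !inE (connect_trans hsa hav) (connect_trans hsa haw).
have hS : stable U Src.
  apply/forall_inP => s; rewrite inE => hs; apply/forall_inP => t; rewrite inE => ht.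
  apply/negP => hst; have := hst; move/H => [hne _].
  have [a /andP[has hat]] := anc _ _ hst.
  by move: hne; rewrite -(anc_source hs has) -(anc_source ht hat) eqxx.
apply: (@leq_trans #|F|).
  rewrite /delta; case: ex_minnP => n _; apply.
  by apply/existsP; exists F; rewrite hF eqxx.
apply: leq_trans (leq_imset_card _ _) _.
exact: (@leq_bigmax_cond _ (stable U) (fun S : {set V} => #|S|)).
Qed.

Lemma uec_backward : alpha U = delta U -> UEC_representative U.
Proof.
move=> e.
have [S hS hSa] := alpha_wit U.
move: e; rewrite /delta; case: ex_minnP => n /existsP[F /andP[hF /eqP hFn]] _ e.
have hcl : forall C, C \in F -> clique U C by case/and3P: hF => /forall_inP.
pose g := gpick F.
have ginj := gpick_inj hF hS.
have gF : forall s, g s \in F /\ s \in g s := fun s => gpickP s hF.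
have himg : g @: S = F.
  apply/eqP; rewrite eqEcard; apply/andP; split.
    by apply/subsetP => C /imsetP[s _ ->]; exact: (gF s).1.
  by rewrite (card_in_imset ginj) hSa e hFn.
have K1 : forall C s t, C \in F -> s \in S -> t \in S -> s \in C -> t \in C -> s = t.
  move=> C s t hC hs ht hsC htC; apply/eqP; apply: contraNT (stableP hS hs ht) => hst.
  exact: cliqueP (hcl _ hC) hsC htC hst.
have K2 : forall C, C \in F -> exists2 s, s \in S & C = g s.
  by move=> C; rewrite -himg => /imsetP[s hs ->]; exists s.
pose D : rel V := fun x y => [&& x \in S, y \notin S & y \in g x].
have short : forall a v, connect D a v -> a = v \/ D a v.
  move=> a v /connectP[[|u [|u' q]] /= hp ->]; [by left|by right; case/andP: hp|].
  by case/and3P: hp => /and3P[_ hu _] /and3P[hu' _ _] _; rewrite hu' in hu.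
exists D; split.
  move=> x y /and3P[hx hy _]; apply/negP => /short [exy|/and3P[hy' _ _]].
    by move: hx; rewrite -exy (negbTE hy).
  by rewrite hy' in hy.
move=> v w; split.
- move=> hvw; split; first by apply: contraTneq hvw => ->; rewrite adj_irr.
  have [C hC /andP[hv hw]] : exists2 C, C \in F & (v \in C) && (w \in C).
    by case/and3P: hF => _ _ /forallP/(_ v)/forallP/(_ w)/implyP/(_ hvw)/exists_inP.
  have [s hs eC] := K2 C hC.
  have hsC : s \in C by rewrite eC; exact: (gF s).2.
  have notS : forall x, x \in C -> x != s -> x \notin S.
    move=> x hx hxs; apply: contra hxs => hxS; apply/eqP; exact: K1 hC hxS hs hx hsC.
  have hne : v != w by apply: contraTneq hvw => ->; rewrite adj_irr.
  case: (eqVneq v s) => [evs|hvs].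
    have hwS : w \notin S by apply: notS => //; rewrite -evs eq_sym.
    exists [:: w]; rewrite /is_trek /= !inE hne eqxx /= !andbT.
    by rewrite /D evs hs hwS -eC hw.
  case: (eqVneq w s) => [ews|hws].
    have hvS : v \notin S by apply: notS => //; rewrite -ews.
    exists [:: w]; rewrite /is_trek /= !inE hne eqxx /= !andbT.
    by rewrite /D ews hs hvS -eC hv orbT.
  have hvS : v \notin S by apply: notS.
  have hwS : w \notin S by apply: notS.
  exists [:: s; w]; rewrite /is_trek /= !inE !negb_or hne hvs eqxx (eq_sym s w) hws.
  by rewrite /D hs hvS hwS -eC hv hw (negbTE hvS) /= ?andbT ?orbT.
- move=> [hne [p /and4P[hp /eqP hl hu hnc]]].
  have [a /andP[hav haw]] := (trek_anc hp hnc).1.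
  rewrite hl in haw.
  case: (short _ _ hav) => [eav|/and3P[ha _ hva]];
    case: (short _ _ haw) => [eaw|/and3P[ha' _ hwa]].
  + by move: hne; rewrite -eav -eaw eqxx.
  + subst a; exact: cliqueP (hcl _ (gF v).1) (gF v).2 hwa hne.
  + subst a; rewrite adj_sym; apply: cliqueP (hcl _ (gF w).1) (gF w).2 hva _.
    by rewrite eq_sym.
  + exact: cliqueP (hcl _ (gF a).1) hva hwa hne.
Qed.

End Main.

Theorem theorem2p9 (V : finType) (U : ugraph V) :
  UEC_representative U <-> alpha U = delta U.
Proof.
split; last exact: uec_backward.
case=> D [hD H]; apply/eqP; rewrite eqn_leq alpha_le_delta; exact: uec_forward hD H.
Qed.
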